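(* Let $n\geq 1$, let $H$ be an irreducible subgroup of $SL(n,\mathbb{C})$, let $u\in U_n(H)$ and suppose $\pi_n(u)$ has order $d$ in $Z_n(H)$. Then $u$ is conjugate in $SL(n,\mathbb{C})$ to the block diagonal matrix $$\lambda\,\mathrm{diag}\big(I_{n/d},\ \xi^{n/d}I_{n/d},\ \xi^{2n/d}I_{n/d},\dots,\ \xi^{(n/d)(d-1)}I_{n/d}\big)$$ for some $\lambda\in\mathbb{C}^*$, where $\lambda\in\langle\xi\rangle$ if $d$ is odd or if $d$ and $n/d$ are both even, and $\lambda\in \mu\langle \xi\rangle$ where $\mu$ is a square root of $\xi^{-(n/d)(d-1)}$ if $d$ is even and $n/d$ is odd.
   Context: Let $\xi=e^{2\pi i/n}$; the center of $SL(n,\mathbb{C})$ is $\langle \xi I_n\rangle$. $\pi_n:SL(n,\mathbb{C})\to PSL(n,\mathbb{C})=SL(n,\mathbb{C})/\langle \xi I_n\rangle$ is the quotient map. A subgroup $H\le SL(n,\mathbb{C})$ is irreducible if no nonzero proper subspace of $\mathbb{C}^n$ is $H$-invariant. $Z_n(H)$ is the centralizer of $\pi_n(H)$ in $PSL(n,\mathbb{C})$, and $U_n(H)=\pi_n^{-1}(Z_n(H))=\{g\in SL(n,\mathbb{C}) : [g,h]\in\langle\xi I_n\rangle \text{ for all } h\in H\}$, where $[g,h]=ghg^{-1}h^{-1}$. *)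

(* Defs.v *)
From HB Require Import structures.
From mathcomp Require Import all_boot all_order all_algebra.
Set Implicit Arguments. Unset Strict Implicit. Unset Printing Implicit Defensive.
Import Order.TTheory GRing.Theory Num.Theory.
Local Open Scope ring_scope.

Section Defs.
Variables (C : numClosedFieldType) (n : nat).

Definition inSL (g : 'M[C]_n) : Prop := \det g = 1.

Definition subgroup_SL (H : 'M[C]_n -> Prop) : Prop :=
  [/\ H 1%:M,
      (forall g h, H g -> H h -> H (g *m h)),
      (forall g, H g -> H (invmx g)) &
      (forall g, H g -> inSL g)].

(* A subspace of C^n (column vectors) is encoded as the row space of W,
   whose rows are the transposes of the vectors.  W is H-invariant iff
   for every h in H and column vector v in the space, h v is in the space,
   i.e. (W *m h^T <= W)%MS. *)
Definition invariant_subspace (H : 'M[C]_n -> Prop) (W : 'M[C]_n) : Prop :=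
  forall h, H h -> (W *m h^T <= W)%MS.

Definition irreducible_sub (H : 'M[C]_n -> Prop) : Prop :=
  forall W : 'M[C]_n, invariant_subspace H W -> \rank W = 0%N \/ \rank W = n.

Definition in_center (xi : C) (g : 'M[C]_n) : Prop :=
  exists k : nat, g = (xi ^+ k)%:M.

Definition commg_mx (g h : 'M[C]_n) : 'M[C]_n :=
  g *m h *m invmx g *m invmx h.

(* U_n(H) = pi_n^{-1}(Z_n(H)) *)
Definition U_set (xi : C) (H : 'M[C]_n -> Prop) (g : 'M[C]_n) : Prop :=
  inSL g /\ forall h, H h -> in_center xi (commg_mx g h).

(* pi_n(u) has order d in PSL(n,C) (equivalently in the subgroup Z_n(H)) *)
Definition proj_order (xi : C) (u : 'M[C]_n) (d : nat) : Prop :=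
  [/\ (0 < d)%N, in_center xi (u ^+ d) &
      forall m : nat, (0 < m < d)%N -> ~ in_center xi (u ^+ m)].

(* diag(I_{n/d}, xi^{n/d} I_{n/d}, ..., xi^{(n/d)(d-1)} I_{n/d}):
   the i-th diagonal entry (0 <= i < n) lies in block i %/ (n/d). *)
Definition block_diag_roots (xi : C) (d : nat) : 'M[C]_n :=
  diag_mx (\row_(i < n) xi ^+ ((n %/ d) * (i %/ (n %/ d)))).

End Defs.

(* Main.v *)
Require Import Defs.
From HB Require Import structures.
From mathcomp Require Import all_boot all_order all_algebra all_fingroup.
From mathcomp Require Import zify ring.
Import Order.TTheory GRing.Theory Num.Theory.
Set Implicit Arguments. Unset Strict Implicit. Unset Printing Implicit Defensive.
Local Open Scope ring_scope.

From Stdlib Require Import Classical.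

Lemma ex_min_nat (P : nat -> Prop) : (exists k, P k) -> exists k, P k /\ forall j, (j < k)%N -> ~ P j.
Proof.
move=> [k Pk]; elim: k {-2}k (leqnn k) Pk => [|m IH] k Hk Pk.
  exists k; split=> // j; move: Hk; rewrite leqn0 => /eqP->; by [].
case: (classic (exists j, (j < k)%N /\ P j)) => [[j [Hj Pj]]|Hno].
  apply: (IH j) => //; move: Hk Hj; lia.
exists k; split=> // j Hj Pj; apply: Hno; by exists j.
Qed.

Lemma count_sum_uniq (T : eqType) (X s : seq T) : uniq X -> all (mem X) s ->
  size s = (\sum_(x <- X) count_mem x s)%N.
Proof.
move=> uX; elim: s => [|y s IH] /=; first by rewrite big1.
move=> /andP[yX sX]; rewrite IH // big_split /=.
rewrite -add1n; congr (_ + _)%N.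
have <- : count_mem y X = 1%N by rewrite count_uniq_mem // yX.
rewrite -sum1_count big_mkcond /=.
by apply: eq_bigr => x _; rewrite eq_sym; case: (_ == _).
Qed.

Lemma block_sum (F : nat -> nat) N g : (0 < g)%N ->
  (\sum_(0 <= i < N * g) F (i %/ g) = g * \sum_(0 <= q < N) F q)%N.
Proof.
move=> g0; elim: N => [|N IH]; first by rewrite mul0n !big_geq // muln0.
rewrite (@big_cat_nat _ _ _ (N * g)) //=; last by rewrite leq_pmul2r.
rewrite IH big_nat_recr //= mulnDr; congr (_ + _)%N.
rewrite (eq_big_nat _ _ (F2 := fun _ => F N)); last first.
  move=> i /andP[h1 h2]; rewrite -(subnKC h1) divnMDl // divn_small ?addn0 //.
  by move: h2; rewrite mulSn; lia.
by rewrite sum_nat_const_nat mulSn addnK mulnC.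
Qed.

Lemma twice_tri N : (2 * \sum_(0 <= q < N) q = N * N.-1)%N.
Proof.
elim: N => [|N IH]; first by rewrite big_geq.
rewrite big_nat_recr //= mulnDr IH; case: N {IH} => [|N] /=; nia.
Qed.

Lemma count_iota_sum (P : pred nat) m :
  count P (iota 0 m) = (\sum_(0 <= i < m) (P i : nat))%N.
Proof.
rewrite -sum1_count big_mkcond /index_iota subn0; apply: eq_bigr => i _.
by case: (P i).
Qed.

Lemma twice_tri_g N g : (2 * \sum_(0 <= q < N) (g * q) = g * (N * N.-1))%N.
Proof.
elim: N => [|N IH]; first by rewrite big_geq //; lia.
rewrite big_nat_recr //= mulnDr IH; case: N {IH} => [|N] /=; nia.
Qed.

Section MxHelp.
Variable F : fieldType.

Lemma char_poly_conj n (P A : 'M[F]_n) : P \in unitmx ->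
  char_poly (P *m A *m invmx P) = char_poly A.
Proof.
move=> Pu; rewrite /char_poly /char_poly_mx.
set Pc := map_mx polyC P; set Qc := map_mx polyC (invmx P).
have PQ : Pc *m Qc = 1%:M by rewrite -map_mxM mulmxV // map_mx1.
have -> : 'X%:M - map_mx polyC (P *m A *m invmx P) = Pc *m ('X%:M - map_mx polyC A) *m Qc.
  by rewrite !map_mxM mulmxBr mulmxBl mul_mx_scalar -scalemxAl -mul_mx_scalar PQ mul1mx
     -mulmxA.
rewrite !det_mulmx mulrC mulrA -det_mulmx.
by rewrite (_ : Qc *m Pc = 1%:M) ?det1 ?mul1r // -map_mxM mulVmx // map_mx1.
Qed.

Lemma char_poly_diag n (d : 'rV[F]_n) :
  char_poly (diag_mx d) = \prod_(i < n) ('X - (d 0 i)%:P).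
Proof.
by rewrite char_poly_trig ?diag_mx_is_trig //; apply: eq_bigr => i _; rewrite mxE eqxx mulr1n.
Qed.

Lemma diag_mx_expr n (d : 'rV[F]_n) m :
  (diag_mx d) ^+ m = diag_mx (\row_i (d 0 i) ^+ m).
Proof.
elim: m => [|m IH].
  by apply/matrixP => i j; rewrite !mxE; case: (i == j).
rewrite exprS IH -mulmxE mul_diag_mx; apply/matrixP => i j; rewrite !mxE.
by case: (i == j); rewrite ?mulr1n ?mulr0n ?mulr0 // exprS.
Qed.

Lemma perm_conj_diag n (p : 'S_n) (d : 'rV[F]_n) :
  perm_mx p *m diag_mx d *m invmx (perm_mx p) = diag_mx (\row_i d 0 (p i)).
Proof.
have pu : (perm_mx p : 'M[F]_n) \in unitmx by apply: unitmx_perm.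
rewrite -[RHS](mulmxK pu); congr (_ *m _).
rewrite mul_mx_diag mul_diag_mx; apply/matrixP => i j; rewrite !mxE.
by case: eqP => [->|]; rewrite ?mulr1n ?mulr0n ?mulr0 ?mul0r ?mul1r ?mulr1.
Qed.

End MxHelp.

Section Main.
Variables (C : numClosedFieldType) (n : nat) (xi : C).
Hypotheses (Hn : (0 < n)%N) (Hxi : n.-primitive_root xi).
Variable H : 'M[C]_n -> Prop.
Hypotheses (HH : subgroup_SL H) (Hirr : irreducible_sub H).
Variable u : 'M[C]_n.
Hypothesis Hu : U_set xi H u.

Lemma xi_neq0 : xi != 0.
Proof.
apply/eqP => x0; have := prim_expr_order Hxi; rewrite x0 expr0n.
by case: n Hn => // m _ /eqP; rewrite eq_sym oner_eq0.
Qed.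

Lemma SL_unit (g : 'M[C]_n) : inSL g -> g \in unitmx.
Proof. by rewrite /inSL unitmxE => ->; rewrite unitr1. Qed.

Lemma H_unit h : H h -> h \in unitmx.
Proof. by case: HH => _ _ _ HS /HS /SL_unit. Qed.

Lemma u_unit : u \in unitmx.
Proof. by case: Hu => /SL_unit. Qed.

Lemma Hcomm h : H h -> exists k : nat, u *m h = xi ^+ k *: (h *m u).
Proof.
move=> Hh; case: Hu => _ /(_ h Hh) [k Hk]; exists k.
have hu := H_unit Hh; have uu := u_unit.
move: Hk; rewrite /commg_mx => /(congr1 (mulmx^~ h)); rewrite mulmxKV //.
move=> /(congr1 (mulmx^~ u)); rewrite mulmxKV // => ->.
by rewrite mul_scalar_mx scalemxAl.
Qed.

Definition Kp k := exists h, H h /\ u *m h = xi ^+ k *: (h *m u).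

Lemma Kp0 : Kp 0.
Proof.
by exists 1%:M; case: HH => H1 _ _ _; split=> //; rewrite mulmx1 mul1mx scale1r.
Qed.

Lemma Kp_add a b : Kp a -> Kp b -> Kp (a + b).
Proof.
move=> [h1 [H1 E1]] [h2 [H2 E2]]; exists (h1 *m h2); split.
  by case: HH => _ HM _ _; apply: HM.
rewrite mulmxA E1 -scalemxAl -mulmxA E2 -scalemxAr scalerA -exprD mulmxA.
by rewrite addnC.
Qed.

Lemma Kp_eq a b : xi ^+ a = xi ^+ b -> Kp a -> Kp b.
Proof. by move=> E [h [Hh Eh]]; exists h; rewrite -E. Qed.

Lemma Kp_n : Kp n.
Proof. by apply: (Kp_eq _ Kp0); rewrite expr0 (prim_expr_order Hxi). Qed.

Lemma Kp_inv a : Kp a -> Kp (a * n.-1).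
Proof.
move=> [h [Hh Eh]]; exists (invmx h); split.
  by case: HH => _ _ HV _; apply: HV.
have hu := H_unit Hh.
have E1 : invmx h *m u = xi ^+ a *: (u *m invmx h).
  rewrite -{1}(mulmxK hu u) -[u *m h]/(u *m h) Eh.
  by rewrite -!scalemxAl -scalemxAr !mulmxA mulVmx // mul1mx.
rewrite E1 scalerA -exprD.
have -> : (a * n.-1 + a = a * n)%N by case: n Hn => // m _; rewrite /= mulnS addnC.
by rewrite mulnC exprM (prim_expr_order Hxi) expr1n scale1r.
Qed.

Lemma Kp_mul a q : Kp a -> Kp (q * a).
Proof.
move=> Ka; elim: q => [|q IH]; first by rewrite mul0n; exact: Kp0.
by rewrite mulSn; apply: Kp_add.
Qed.

Lemma g_exists : exists g, [/\ (0 < g)%N, Kp g & forall k, Kp k -> (g %| k)%N].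
Proof.
have [g [[g0 Kg] Hmin]] : exists g, ((0 < g)%N /\ Kp g) /\
    forall j, (j < g)%N -> ~ ((0 < j)%N /\ Kp j).
  by apply: ex_min_nat; exists n; split=> //; exact: Kp_n.
exists g; split=> // k Kk.
set q := (k %/ g)%N; set r := (k %% g)%N.
have Kqg := Kp_inv (Kp_mul q Kg).
have Kr : Kp r.
  apply: (Kp_eq _ (Kp_add Kk Kqg)).
  rewrite {1}(divn_eq k g) -/q -/r -addnA exprD exprD mulrCA -exprD.
  have -> : (q * g + q * g * n.-1 = q * g * n)%N.
    by case: n Hn => // m _; rewrite /= mulnS.
  by rewrite mulnC exprM (prim_expr_order Hxi) expr1n mulr1.
rewrite /dvdn; apply/eqP; case: (posnP r) => // r0; exfalso.
by apply: (Hmin r); [rewrite ltn_pmod | split].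
Qed.

Lemma HcommT h : H h -> exists k : nat, h^T *m u^T = xi ^+ k *: (u^T *m h^T).
Proof.
move=> /Hcomm [k Ek]; exists k.
by rewrite -trmx_mul -[u^T *m h^T]trmx_mul Ek; apply/matrixP => i j; rewrite !mxE.
Qed.

Lemma eig_move h k a : h^T *m u^T = xi ^+ k *: (u^T *m h^T) ->
  (eigenspace u^T a *m h^T <= eigenspace u^T (xi ^+ k * a))%MS.
Proof.
move=> E; apply/eigenspaceP.
have /eigenspaceP Ea := submx_refl (eigenspace u^T a).
by rewrite -mulmxA E -scalemxAr mulmxA Ea -scalemxAl scalerA mulrC.
Qed.

Lemma diag_u : exists (R : 'M[C]_n) (dl : 'rV[C]_n),
  R \in unitmx /\ u = R *m diag_mx dl *m invmx R.
Proof.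
set U := u^T.
have Uu : U \in unitmx by rewrite unitmx_tr u_unit.
have [a0 Ha0] : exists a0, eigenvalue U a0.
  have : size (char_poly U) != 1%N by rewrite size_char_poly; case: n Hn.
  by move=> /closed_rootP [a Ha]; exists a; rewrite eigenvalue_root_char.
have a00 : a0 != 0.
  apply/eqP => a0E; move/eigenvalueP: Ha0 => [v Hv /eqP]; apply.
  by rewrite -(mulmxK Uu v) Hv a0E scale0r mul0mx.
set V := (\sum_(j < n) eigenspace U (a0 * xi ^+ j))%MS.
have Vinv : invariant_subspace H V.
  move=> h Hh; have [k Ek] := HcommT Hh.
  rewrite (sumsmxMr _ _ _); apply/sumsmx_subP => j _.
  apply: submx_trans (eig_move (a0 * xi ^+ j) Ek) _.
  have jk : ((j + k) %% n < n)%N by rewrite ltn_pmod.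
  apply: (sumsmx_sup (Ordinal jk)) => //=.
  by rewrite (prim_expr_mod Hxi) exprD mulrCA [xi ^+ j * _]mulrC submx_refl.
have Vfull : row_full V.
  case: (Hirr Vinv) => [/eqP|/eqP //]; rewrite mxrank_eq0 => /eqP V0.
  have : (eigenspace U (a0 * xi ^+ (Ordinal Hn)) <= V)%MS by apply: (sumsmx_sup (Ordinal Hn)).
  by rewrite V0 submx0 /= expr0 mulr1 => E0; move: Ha0; rewrite /eigenvalue E0.
have : diagonalizable U.
  apply/diagonalizablePeigen; exists [seq a0 * xi ^+ (val j) | j : 'I_n].
    rewrite map_inj_uniq ?enum_uniq // => i j /(mulfI a00) /eqP.
    rewrite (eq_prim_root_expr Hxi) !modn_small ?ltn_ord // => /eqP E.
    exact: val_inj.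
  rewrite big_image /=; apply/eqmxP; rewrite submx1 sub1mx.
  exact: Vfull.
move=> [P Pu /(diagonalizable_forLR Pu) [dl Edl]].
exists P^T, dl; split; first by rewrite unitmx_tr.
rewrite -trmx_inv -tr_diag_mx -!trmx_mul -(trmxK u) -/U Edl mxpoly.conjVmx //.
by rewrite mulmxA.
Qed.

Section Phase2.
Variables (R : 'M[C]_n) (dl : 'rV[C]_n).
Hypotheses (HR : R \in unitmx) (Hud : u = R *m diag_mx dl *m invmx R).

Lemma ED : diag_mx dl = invmx R *m u *m R.
Proof. by rewrite Hud !mulmxA mulVmx // mul1mx mulmxKV. Qed.

Lemma hp_unit h : H h -> invmx R *m h *m R \in unitmx.
Proof. by move=> Hh; rewrite !unitmx_mul unitmx_inv HR H_unit. Qed.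

Lemma conjD h k : u *m h = xi ^+ k *: (h *m u) ->
  diag_mx dl *m (invmx R *m h *m R) = xi ^+ k *: ((invmx R *m h *m R) *m diag_mx dl).
Proof.
move=> E; rewrite ED !mulmxA !mulmxK //.
by rewrite -(mulmxA (invmx R) u h) E -scalemxAr !scalemxAl !mulmxA.
Qed.

Lemma entry_rel (h' : 'M[C]_n) c : diag_mx dl *m h' = c *: (h' *m diag_mx dl) ->
  forall i j, h' i j != 0 -> dl 0 i = c * dl 0 j.
Proof.
move=> /matrixP E i j nz; move: (E i j).
rewrite mul_diag_mx mul_mx_diag !mxE => Eij.
apply: (mulIf nz); rewrite Eij; ring.
Qed.

Lemma irr_D (W : 'M[C]_n) :
  (forall h, H h -> (W *m (invmx R *m h *m R)^T <= W)%MS) ->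
  \rank W = 0%N \/ \rank W = n.
Proof.
move=> HW; have RTf : row_free R^T by rewrite row_free_unit unitmx_tr.
rewrite -(mxrankMfree W RTf); apply: Hirr => h Hh.
have -> : W *m R^T *m h^T = W *m (invmx R *m h *m R)^T *m R^T.
  rewrite !trmx_mul !mulmxA -(mulmxA _ (invmx R)^T) -trmx_mul mulmxV // trmx1.
  by rewrite mulmx1.
by apply: submxMr; apply: HW.
Qed.

Lemma irr_pred (S : pred C) i0 :
  (forall x k, S x -> Kp k -> S (xi ^+ k * x)) -> S (dl 0 i0) -> forall j, S (dl 0 j).
Proof.
move=> Scl Si0.
set W := diag_mx (\row_i ((S (dl 0 i))%:R : C)).
have HW : forall h, H h -> (W *m (invmx R *m h *m R)^T <= W)%MS.
  move=> h Hh; have [k Ek] := Hcomm Hh.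
  have Kk : Kp k by exists h.
  have Er := entry_rel (conjD Ek).
  move: (invmx R *m h *m R) Er => h' Er.
  have -> : W *m h'^T = W *m h'^T *m W.
    rewrite mul_diag_mx mul_mx_diag; apply/matrixP => i j; rewrite !mxE.
    case Sj: (S (dl 0 j)); first by rewrite mulr1.
    case Si: (S (dl 0 i)); last by rewrite !mul0r.
    case: (eqVneq (h' j i) 0) => [->|nz]; first by rewrite !mulr0 ?mul0r.
    by move: (Scl _ _ Si Kk); rewrite -(Er _ _ nz) Sj.
  exact: submxMl.
case: (irr_D HW) => [/eqP|/eqP Wf].
  rewrite mxrank_eq0 => /eqP /matrixP /(_ i0 i0); rewrite !mxE eqxx Si0 mulr1n => /eqP.
  by rewrite oner_eq0.
move=> j; apply/negPn/negP => Sj.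
have : W \in unitmx by rewrite -row_full_unit.
by rewrite unitmxE det_diag (bigD1 j) //= mxE (negPf Sj) mul0r unitr0.
Qed.

Lemma prod_map_ord (f : 'I_n -> C) :
  \prod_(x <- map f (enum 'I_n)) ('X - x%:P) = \prod_(i < n) ('X - (f i)%:P).
Proof. by rewrite big_map big_enum. Qed.

Lemma scale_diag (c : C) : c *: diag_mx dl = diag_mx (\row_i (c * dl 0 i)).
Proof.
by apply/matrixP => i j; rewrite !mxE; case: (i == j); rewrite ?mulr1n ?mulr0n ?mulr0.
Qed.

Definition sq := map (fun i => dl 0 i) (enum 'I_n).

Lemma perm_scale k : Kp k -> perm_eq sq (map (fun x => xi ^+ k * x) sq).
Proof.
move=> [h [Hh Eh]]; have E := conjD Eh; have hu := hp_unit Hh.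
move: (invmx R *m h *m R) E hu => h' E hu.
have E2 : invmx h' *m diag_mx dl *m invmx (invmx h') = xi ^+ k *: diag_mx dl.
  by rewrite invmxK -mulmxA E -scalemxAr mulmxA mulVmx // mul1mx.
have hu' : invmx h' \in unitmx by rewrite unitmx_inv.
have := char_poly_conj (diag_mx dl) hu'.
rewrite E2 scale_diag !char_poly_diag => Ecp.
rewrite /sq -map_comp; apply: prod_XsubC_eq; rewrite !big_map.
symmetry; rewrite -[RHS]Ecp; apply: eq_bigr => i _; rewrite mxE.
by [].
Qed.

Lemma count_scale k x : Kp k -> count_mem (xi ^+ k * x) sq = count_mem x sq.
Proof.
move=> Kk; rewrite (seq.permP (perm_scale Kk)) count_map; apply: eq_count => y /=.
by rewrite (inj_eq (mulfI (expf_neq0 k xi_neq0))).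
Qed.

Lemma u_expr m : u ^+ m = R *m diag_mx (\row_i (dl 0 i) ^+ m) *m invmx R.
Proof.
rewrite -diag_mx_expr; elim: m => [|m IH].
  by rewrite !expr0 mulmx1 mulmxV.
rewrite !exprS -!mulmxE IH {1}Hud !mulmxA mulmxKV //.
Qed.

Section WithG.
Variable g : nat.
Hypotheses (g0 : (0 < g)%N) (Kg : Kp g) (gdiv : forall k, Kp k -> (g %| k)%N).
Let N := (n %/ g)%N.
Let i0 := Ordinal Hn.
Let a0 := dl 0 i0.

Lemma nN : n = (N * g)%N.
Proof. by rewrite divnK // gdiv //; apply: Kp_n. Qed.

Lemma N0 : (0 < N)%N.
Proof. by move: Hn; rewrite nN muln_gt0 => /andP[]. Qed.

Lemma detD : \det (diag_mx dl) = 1.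
Proof.
case: Hu => Hdet _; rewrite ED !det_mulmx Hdet mulr1 -det_mulmx mulVmx //.
by rewrite det1.
Qed.

Lemma a0_neq0 : a0 != 0.
Proof.
apply/eqP => a00; have := detD; rewrite det_diag (bigD1 i0) //= -/a0 a00 mul0r.
by move/eqP; rewrite eq_sym oner_eq0.
Qed.

Lemma exp_g_mod t : xi ^+ (g * (t %% N)) = xi ^+ (g * t).
Proof. by rewrite muln_modr [(g * N)%N]mulnC -nN (prim_expr_mod Hxi). Qed.

Lemma gt_lt t : (t < N)%N -> (g * t < n)%N.
Proof. by move=> lt; rewrite nN mulnC ltn_pmul2r. Qed.

Lemma allX j : exists2 t, (t < N)%N & dl 0 j = a0 * xi ^+ (g * t).
Proof.
pose S := fun x : C => [exists t : 'I_N, x == a0 * xi ^+ (g * t)].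
have : S (dl 0 j).
  apply: (@irr_pred S i0).
    move=> x k /existsP [t /eqP ->] Kk; have /dvdnP [m Em] := gdiv Kk.
    apply/existsP; exists (Ordinal (ltn_pmod (t + m) N0)); apply/eqP.
    rewrite /= exp_g_mod Em mulnDr exprD (mulnC m g); ring.
  by apply/existsP; exists (Ordinal N0); rewrite /= muln0 expr0 mulr1.
by move=> /existsP [t /eqP ->]; exists t.
Qed.

Lemma count_X t : count_mem (a0 * xi ^+ (g * t)) sq = count_mem a0 sq.
Proof. by rewrite mulrC count_scale // mulnC; apply: Kp_mul. Qed.

Lemma m0g : count_mem a0 sq = g.
Proof.
pose X := map (fun t => a0 * xi ^+ (g * t)) (index_iota 0 N).
have uX : uniq X.
  rewrite map_inj_in_uniq ?iota_uniq // => t1 t2.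
  rewrite !mem_index_iota /= => lt1 lt2 /(mulfI a0_neq0) /eqP.
  rewrite (eq_prim_root_expr Hxi) !modn_small ?gt_lt // => /eqP E.
  by apply/eqP; rewrite -(eqn_pmul2l g0) E.
have aX : all (mem X) sq.
  apply/allP => x /mapP [j _ ->]; have [t lt ->] := allX j.
  by apply: map_f; rewrite mem_index_iota.
have := count_sum_uniq uX aX; rewrite size_map size_enum_ord big_map.
under eq_bigr do rewrite count_X.
rewrite sum_nat_const_nat subn0 {1}nN => /eqP; rewrite eqn_pmul2l ?N0 //.
by move/eqP.
Qed.

Definition tt := map (fun i : 'I_n => a0 * xi ^+ (g * (i %/ g))) (enum 'I_n).

Lemma count_tt q : (q < N)%N -> count_mem (a0 * xi ^+ (g * q)) tt = g.
Proof.
move=> qN; rewrite /tt count_map.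
rewrite (eq_count (a2 := fun i : 'I_n => (fun m : nat => (m %/ g)%N == q) (val i))); last first.
  move=> i /=; rewrite (inj_eq (mulfI a0_neq0)) (eq_prim_root_expr Hxi).
  rewrite !modn_small ?gt_lt // ?eqn_pmul2l //.
  rewrite ltn_divLR // -nN; exact: ltn_ord.
rewrite -(count_map val (fun m : nat => (m %/ g)%N == q)) val_enum_ord count_iota_sum nN (block_sum (fun x => (x == q : nat))) //.
by rewrite -count_iota_sum count_uniq_mem ?iota_uniq // mem_iota qN muln1.
Qed.

Lemma perm_tt : perm_eq sq tt.
Proof.
apply/allP => x; rewrite mem_cat => /orP[] /mapP [i _ ->]; apply/eqP.
  by have [t lt ->] := allX i; rewrite count_tt // count_X m0g.
rewrite count_tt ?count_X ?m0g //.
by rewrite ltn_divLR // -nN ltn_ord.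
Qed.

Lemma dN d : proj_order xi u d -> d = N.
Proof.
move=> [d0 [s Es] Hmin].
have Ed : forall j, dl 0 j ^+ d = xi ^+ s.
  move=> j; have : diag_mx (\row_i (dl 0 i) ^+ d) = (xi ^+ s)%:M.
    have -> : diag_mx (\row_i (dl 0 i) ^+ d) = invmx R *m (u ^+ d) *m R.
      by rewrite u_expr !mulmxA mulVmx // mul1mx mulmxKV.
    by rewrite Es scalar_mxC -mulmxA mulVmx // mulmx1.
  by move/matrixP/(_ j j); rewrite !mxE eqxx !mulr1n.
have : (0 < count_mem (xi ^+ g * a0)%R sq)%N by rewrite count_scale // m0g.
rewrite -has_count has_pred1 => /mapP [j1 _ Ej1].
have Nd : (N %| d)%N.
  have : xi ^+ (g * d) = 1.
    apply: (mulIf (expf_neq0 d a0_neq0)); rewrite mul1r exprM -exprMn Ej1.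
    by rewrite !Ed.
  move/eqP; rewrite -(prim_order_dvd Hxi) nN [(g * d)%N]mulnC dvdn_pmul2r //.
have cN : in_center xi (u ^+ N).
  have Eu : u ^+ N = (a0 ^+ N)%:M.
    rewrite u_expr.
    have -> : diag_mx (\row_i (dl 0 i) ^+ N) = (a0 ^+ N)%:M.
      apply/matrixP => i j; rewrite !mxE; have [t _ ->] := allX i.
      rewrite exprMn -exprM mulnAC [(g * N)%N]mulnC -nN.
      by rewrite exprM (prim_expr_order Hxi) expr1n mulr1.
    by rewrite scalar_mxC mulmxK.
  have : (a0 ^+ N) ^+ n = 1.
    have := congr1 determinant Eu; rewrite det_scalar => <-.
    rewrite u_expr !det_mulmx mulrC mulrA -det_mulmx mulVmx // det1 mul1r.
    rewrite det_diag; under eq_bigr do rewrite mxE.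
    by rewrite prodrXl -det_diag detD expr1n.
  move=> /(prim_rootP Hxi) [i Ei]; exists i; by rewrite Eu Ei.
case: (ltngtP N d) => // [Nltd|dltN].
  by exfalso; apply: (Hmin N) => //; rewrite N0.
by move: (dvdn_leq d0 Nd); rewrite leqNgt dltN.
Qed.

Lemma final_goal d : proj_order xi u d ->
  (d %| n)%N /\
  exists lambda : C,
    [/\ lambda != 0,
        (if odd d || ~~ odd (n %/ d) then exists k : nat, lambda = xi ^+ k
         else exists (mu : C) (k : nat),
                mu ^+ 2 = xi ^- ((n %/ d) * d.-1) /\ lambda = mu * xi ^+ k) &
        exists P : 'M[C]_n,
          inSL P /\ P *m u *m invmx P = lambda *: block_diag_roots n xi d].
Proof.
move=> Hd; rewrite (dN Hd).
have nNg : (n %/ N = g)%N by rewrite {1}nN mulKn // N0.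
rewrite nNg; split; first by rewrite nN dvdn_mulr.
have [p Ep] : exists p : 'S_n, forall i, dl 0 (p i) = a0 * xi ^+ (g * (i %/ g)).
  have Tv : val [tuple dl 0 i | i < n] = sq.
    by [].
  have : perm_eq tt [tuple dl 0 i | i < n] by rewrite Tv perm_sym perm_tt.
  case/tuple_permP => p Ep; exists p => i.
  have := congr1 (fun s => nth 0 s i) Ep.
  rewrite /tt (nth_map i0) ?size_enum_ord // nth_ord_enum => ->.
  by rewrite -(tnth_nth 0 [tuple _ | i < n]) !tnth_mktuple.
set D' := diag_mx (\row_i dl 0 (p i)).
have ED' : D' = a0 *: block_diag_roots n xi N.
  apply/matrixP => i j; rewrite /D' /block_diag_roots nNg !mxE Ep.
  by case: (i == j); rewrite ?mulr1n ?mulr0n ?mulr0.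
have Pmu : (perm_mx p : 'M[C]_n) \in unitmx by apply: unitmx_perm.
have PmD : perm_mx p *m diag_mx dl = D' *m perm_mx p.
  by rewrite /D' -perm_conj_diag mulmxKV.
have detD' : \det D' = 1.
  rewrite /D' -perm_conj_diag !det_mulmx detD mulr1 -det_mulmx mulmxV //.
  by rewrite det1.
set P0 := perm_mx p *m invmx R.
have P0u : P0 *m u = D' *m P0.
  have Ru : invmx R *m u = diag_mx dl *m invmx R.
    by rewrite Hud !mulmxA mulVmx // mul1mx.
  by rewrite /P0 -mulmxA Ru mulmxA PmD -mulmxA.
have P0unit : P0 \in unitmx by rewrite unitmx_mul Pmu unitmx_inv.
have dP0 : \det P0 != 0 by move: P0unit; rewrite unitmxE unitfE.
set r := n.-root (\det P0)^-1.
have rn : r ^+ n = (\det P0)^-1 by rewrite rootCK.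
set P := r *: P0.
have detP : \det P = 1 by rewrite detZ rn mulVf.
have Punit : P \in unitmx by rewrite unitmxE detP unitr1.
have Pu : P *m u = D' *m P by rewrite /P -scalemxAl P0u scalemxAr.
have conjP : P *m u *m invmx P = a0 *: block_diag_roots n xi N.
  by rewrite Pu mulmxK.
exists a0; split; first exact: a0_neq0; last by exists P.
have Es : (\sum_(i < n) g * (i %/ g) = g * \sum_(0 <= q < N) (g * q))%N.
  rewrite -(big_mkord xpredT (fun i => g * (i %/ g))%N) {1}nN.
  exact: (block_sum (fun x => g * x)%N).
have Hdet : a0 ^+ n * xi ^+ (g * \sum_(0 <= q < N) (g * q))%N = 1.
  rewrite -detD' ED' detZ /block_diag_roots nNg det_diag -Es -prodrXr.
  by apply: congr1; apply: eq_bigr => i _; rewrite mxE.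
move: Hdet; set T := (\sum_(0 <= q < N) (g * q))%N => Hdet.
have ET : (2 * T = g * (N * N.-1))%N := twice_tri_g N g.
case: ifP => Hc.
  have xE : xi ^+ (g * T) = 1.
    apply/eqP; rewrite -(prim_order_dvd Hxi); apply/dvdnP.
    case/orP: Hc => [oN|eg].
      have hN := odd_halfK oN; rewrite -mul2n in hN.
      exists (g * N./2)%N; rewrite nN.
      have ET' : T = (g * N * N./2)%N.
        apply/eqP; rewrite -(eqn_pmul2l (isT : (0 < 2)%N)) ET -hN; apply/eqP; ring.
      rewrite ET'; ring.
    have hg := even_halfK eg; rewrite -mul2n in hg.
    exists (g./2 * N.-1)%N; rewrite nN.
    have ET' : T = (g./2 * N * N.-1)%N.
      apply/eqP; rewrite -(eqn_pmul2l (isT : (0 < 2)%N)) ET -{1}hg; apply/eqP; ring.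
    rewrite ET'; ring.
  have a0n : a0 ^+ n = 1 by rewrite -Hdet xE mulr1.
  have [i Ei] := prim_rootP Hxi a0n; by exists i.
move/negbT: Hc; rewrite negb_or negbK => /andP [eN og].
set m := N./2.
have Nm : N = (2 * m)%N by rewrite mul2n even_halfK.
have m0 : (0 < m)%N by move: N0; rewrite Nm; lia.
set w := xi ^+ (g * m).
have nm : n = (g * m * 2)%N by rewrite nN Nm; lia.
have w2 : w ^+ 2 = 1 by rewrite -exprM -nm (prim_expr_order Hxi).
have w1 : w != 1.
  rewrite -(prim_order_dvd Hxi); apply/negP => /dvdn_leq.
  have gm0 : (0 < g * m)%N by rewrite muln_gt0 g0 m0.
  move=> /(_ gm0); rewrite {1}nm; lia.
have wm1 : w = -1.
  by move: w2; move/eqP; rewrite sqrf_eq1 (negPf w1) /= => /eqP.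
have oddE : odd (g * N.-1).
  by rewrite oddM og /=; move: eN; rewrite -{1}(prednK N0) /=; case: (odd _).
have ET2 : (g * T = (g * m) * (g * N.-1))%N.
  rewrite Nm in ET *.
  have ET' : T = (g * m * (2 * m).-1)%N.
    apply/eqP; rewrite -(eqn_pmul2l (isT : (0 < 2)%N)) ET; apply/eqP; ring.
  rewrite ET'; ring.
have xE : xi ^+ (g * T) = -1 by rewrite ET2 exprM -/w wm1 -signr_odd oddE expr1.
have a0n : a0 ^+ n = -1.
  by move: Hdet; rewrite xE mulrN1 => /eqP; rewrite eqr_oppLR => /eqP.
set mu := 2.-root (xi ^- (g * N.-1)).
have mu2 : mu ^+ 2 = xi ^- (g * N.-1) by rewrite rootCK.
have mun : mu ^+ n = -1.
  rewrite nm mulnC exprM mu2 exprVn -exprM.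
  by rewrite mulnC -ET2 xE invrN1.
have mu0 : mu != 0.
  apply/eqP => mu0; move: mun; rewrite mu0 expr0n.
  case: n Hn => // k _ /eqP; rewrite eq_sym oppr_eq0 oner_eq0.
  by [].
have : (a0 / mu) ^+ n = 1 by rewrite exprMn exprVn a0n mun invrN1 mulrNN mulr1.
case/(prim_rootP Hxi) => i Ei; exists mu, i; split => //.
by rewrite -Ei mulrC divfK.
Qed.

End WithG.

End Phase2.

End Main.


Theorem mainTheorem2 (C : numClosedFieldType) (n : nat) (xi : C)
    (Hn : (0 < n)%N) (Hxi : n.-primitive_root xi)
    (H : 'M[C]_n -> Prop) (HH : subgroup_SL H) (Hirr : irreducible_sub H)
    (u : 'M[C]_n) (Hu : U_set xi H u) (d : nat) (Hd : proj_order xi u d) :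
  (d %| n)%N /\
  exists lambda : C,
    [/\ lambda != 0,
        (if odd d || ~~ odd (n %/ d) then exists k : nat, lambda = xi ^+ k
         else exists (mu : C) (k : nat),
                mu ^+ 2 = xi ^- ((n %/ d) * d.-1) /\ lambda = mu * xi ^+ k) &
        exists P : 'M[C]_n,
          inSL P /\ P *m u *m invmx P = lambda *: block_diag_roots n xi d].
Proof.
have [R [dl [HR Hud]]] := diag_u Hn Hxi HH Hirr Hu.
have [g [g0 Kg gdiv]] := g_exists Hn Hxi HH u.
exact: (final_goal Hn Hxi HH Hirr Hu HR Hud g0 Kg gdiv Hd).
Qed.
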